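(* Let $\mathcal{K}\subset\mathcal{O}_p(\mathcal{L})$ be an ideal of finite multiplicity, and suppose $f\in\mathcal{O}_p(\mathcal{L})$ satisfies $f^n\in\mathcal{K}$ for some integer $n\ge1$. Then $$\operatorname{mult}\mathcal{K}\le n\,\operatorname{mult}\langle\mathcal{K},f\rangle .$$
   Context: $\mathcal{O}_p(\mathcal{L})$ denotes the ring of germs at a point $p$ of holomorphic functions on a two-dimensional complex manifold $\mathcal{L}$ (so $\mathcal{O}_p(\mathcal{L})\cong\mathbb{C}\{x,y\}$). For an ideal $\mathcal{I}\subset\mathcal{O}_p(\mathcal{L})$, $\operatorname{mult}\mathcal{I}=\dim_{\mathbb{C}}\mathcal{O}_p(\mathcal{L})/\mathcal{I}$; finite multiplicity means this dimension is finite. *)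

(* Defs.v *)
From HB Require Import structures.
From mathcomp Require Import all_boot all_order all_algebra.
From mathcomp Require Import complex reals.
Set Implicit Arguments. Unset Strict Implicit. Unset Printing Implicit Defensive.
Import Order.TTheory GRing.Theory Num.Theory.
Local Open Scope ring_scope.

(* A germ at p of a holomorphic function on a 2-dimensional complex manifold
   is, in local coordinates (x,y) centred at p, a convergent power series
   sum_{i,j} a i j x^i y^j, i.e. an element of C{x,y}. *)
Section PowerSeries.
Variable R : realType.
Local Notation C := R[i].

Definition series := nat -> nat -> C.

Definition convergent (a : series) : Prop :=
  exists r M : C, 0 < r /\ forall i j, `|a i j| * r ^+ (i + j) <= M.

Definition sadd (a b : series) : series := fun i j => a i j + b i j.
Definition sopp (a : series) : series := fun i j => - a i j.
Definition szero : series := fun _ _ => 0.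
Definition sone : series := fun i j => if (i == 0%N) && (j == 0%N) then 1 else 0.
Definition sscale (c : C) (a : series) : series := fun i j => c * a i j.
Definition smul (a b : series) : series := fun i j =>
  \sum_(k < i.+1) \sum_(l < j.+1) a k l * b (i - k)%N (j - l)%N.
Fixpoint spow (a : series) (n : nat) : series :=
  match n with 0 => sone | n'.+1 => smul a (spow a n') end.

Definition ideal (I : series -> Prop) : Prop :=
  [/\ (forall a, I a -> convergent a),
      I szero,
      (forall a b, I a -> I b -> I (sadd a b)) &
      (forall g a, convergent g -> I a -> I (smul g a))].

Definition ideal_add_gen (K : series -> Prop) (f : series) : series -> Prop :=
  fun h => exists k g, [/\ K k, convergent g & forall i j, h i j = sadd k (smul g f) i j].

Definition quot_spanned_by (I : series -> Prop) (m : nat) : Prop :=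
  exists e : 'I_m -> series, (forall k, convergent (e k)) /\
    forall g, convergent g -> exists c : 'I_m -> C,
      I (fun i j => g i j - \sum_(k < m) c k * e k i j).

(* mult I = dim_C O_p / I = m  (the quotient is finite dimensional of
   dimension m: it is spanned by m elements and by no fewer). *)
Definition has_mult (I : series -> Prop) (m : nat) : Prop :=
  quot_spanned_by I m /\ forall m', quot_spanned_by I m' -> (m <= m')%N.

Definition finite_mult (I : series -> Prop) : Prop := exists m, quot_spanned_by I m.

End PowerSeries.

(* Main.v *)
Require Import Defs.
From HB Require Import structures.
From mathcomp Require Import all_boot all_order all_algebra.
From mathcomp Require Import complex reals.
From mathcomp Require Import ring zify.
From Stdlib Require Import FunctionalExtensionality Classical.
Import Order.TTheory GRing.Theory Num.Theory.
Local Open Scope ring_scope.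

Lemma smul_local (R : realType) (a b a' b' : series R) i j :
  (forall k l, (k <= i)%N -> (l <= j)%N -> a k l = a' k l /\ b k l = b' k l) ->
  smul a b i j = smul a' b' i j.
Proof.
move=> H; rewrite /smul; apply: eq_bigr => k _; apply: eq_bigr => l _.
have hk : (k <= i)%N by rewrite -ltnS.
have hl : (l <= j)%N by rewrite -ltnS.
have [-> _] := H k l hk hl.
by have [_ ->] := H (i - k)%N (j - l)%N (leq_subr _ _) (leq_subr _ _).
Qed.

Definition cf {R : realType} (p : {poly {poly R[i]}}) : series R :=
  fun k l => p`_k`_l.

Lemma cfM (R : realType) (p q : {poly {poly R[i]}}) i j :
  cf (p * q) i j = smul (cf p) (cf q) i j.
Proof.
rewrite /cf /smul coefM coef_sum; apply: eq_bigr => k _.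
by rewrite coefM.
Qed.

Definition PN {R : realType} (N : nat) (a : series R) : {poly {poly R[i]}} :=
  \poly_(k < N) \poly_(l < N) a k l.

Lemma cf_PN (R : realType) N (a : series R) k l :
  (k < N)%N -> (l < N)%N -> cf (PN N a) k l = a k l.
Proof. by move=> hk hl; rewrite /cf /PN coef_poly hk coef_poly hl. Qed.

Lemma smul_cf (R : realType) N (a b : series R) i j :
  (i < N)%N -> (j < N)%N -> smul a b i j = cf (PN N a * PN N b) i j.
Proof.
move=> hi hj; rewrite cfM; apply: smul_local => k l hk hl.
by rewrite !cf_PN //; apply: leq_ltn_trans; eassumption.
Qed.

Lemma smulC (R : realType) (a b : series R) i j : smul a b i j = smul b a i j.
Proof.
rewrite (@smul_cf _ (i + j).+1) ?ltnS ?leq_addr ?leq_addl //.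
by rewrite mulrC -smul_cf ?ltnS ?leq_addr ?leq_addl.
Qed.

Lemma smulA (R : realType) (a b c : series R) i j :
  smul (smul a b) c i j = smul a (smul b c) i j.
Proof.
set N := (i + j).+1.
have hi : (i < N)%N by rewrite ltnS leq_addr.
have hj : (j < N)%N by rewrite ltnS leq_addl.
transitivity (smul (cf (PN N a * PN N b)) (cf (PN N c)) i j).
  apply: smul_local => k l hk hl; split.
    by apply: smul_cf; apply: leq_ltn_trans; eassumption.
  by rewrite cf_PN //; apply: leq_ltn_trans; eassumption.
transitivity (smul (cf (PN N a)) (cf (PN N b * PN N c)) i j); last first.
  apply: smul_local => k l hk hl; split.
    by rewrite cf_PN //; apply: leq_ltn_trans; eassumption.
  by symmetry; apply: smul_cf; apply: leq_ltn_trans; eassumption.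
by rewrite -!cfM mulrA.
Qed.

Lemma pow_le (F : numDomainType) (x y : F) n : 0 <= x -> x <= y -> x ^+ n <= y ^+ n.
Proof.
move=> x0 xy; elim: n => [|n IH]; first by rewrite !expr0.
by rewrite !exprS ler_pM // exprn_ge0.
Qed.

Lemma conv_smul (R : realType) (a b : series R) :
  convergent a -> convergent b -> convergent (smul a b).
Proof.
move=> [r1 [M1 [r1p H1]]] [r2 [M2 [r2p H2]]].
have [rho [rhop rho1 rho2]] : exists rho : R[i], [/\ 0 < rho, rho <= r1 & rho <= r2].
  case/orP: (real_leVge (gtr0_real r1p) (gtr0_real r2p)) => h.
    by exists r1; split.
  by exists r2; split.
have B1 k l : `|a k l| * rho ^+ (k + l) <= M1.
  apply: le_trans (H1 k l); apply: ler_wpM2l => //.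
  by apply: pow_le => //; apply: ltW.
have B2 k l : `|b k l| * rho ^+ (k + l) <= M2.
  apply: le_trans (H2 k l); apply: ler_wpM2l => //.
  by apply: pow_le => //; apply: ltW.
have M10 : 0 <= M1.
  by apply: le_trans (B1 0%N 0%N); rewrite mulr_ge0 // exprn_ge0 // ltW.
have M20 : 0 <= M2.
  by apply: le_trans (B2 0%N 0%N); rewrite mulr_ge0 // exprn_ge0 // ltW.
exists (rho / 2), (M1 * M2); split; first by rewrite divr_gt0.
move=> i j.
have h2 : 0 < (2 : R[i]) ^+ (i + j) by rewrite exprn_gt0.
apply: le_trans (_ : (\sum_(k < i.+1) \sum_(l < j.+1)
     (M1 * M2 / 2 ^+ (i + j))) <= _).
  apply: le_trans (_ : (\sum_(k < i.+1) \sum_(l < j.+1)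
     `|a k l| * `|b (i - k)%N (j - l)%N|) * (rho / 2) ^+ (i + j) <= _).
    apply: ler_wpM2r; first by rewrite exprn_ge0 // divr_ge0 ?ltW.
    apply: le_trans (ler_norm_sum _ _ _) _; apply: ler_sum => k _.
    apply: le_trans (ler_norm_sum _ _ _) _; apply: ler_sum => l _.
    by rewrite normrM.
  rewrite mulr_suml; apply: ler_sum => k _.
  rewrite mulr_suml; apply: ler_sum => l _.
  have hk : (k <= i)%N by rewrite -ltnS.
  have hl : (l <= j)%N by rewrite -ltnS.
  have e : (i + j = (k + l) + ((i - k) + (j - l)))%N by lia.
  rewrite expr_div_n mulrA; apply: ler_wpM2r; first by rewrite invr_ge0 ltW.
  rewrite e exprD.
  have -> : `|a k l| * `|b (i - k)%N (j - l)%N| * (rho ^+ (k + l) * rho ^+ (i - k + (j - l)))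
     = (`|a k l| * rho ^+ (k + l)) * (`|b (i - k)%N (j - l)%N| * rho ^+ (i - k + (j - l))) by ring.
  apply: ler_pM; [by rewrite mulr_ge0 // exprn_ge0 // ltW
    | by rewrite mulr_ge0 // exprn_ge0 // ltW | exact: B1 | exact: B2].
under eq_bigr => k _ do rewrite sumr_const card_ord.
rewrite sumr_const card_ord -mulrnA -[X in X <= _]mulr_natr -mulrA.
apply: ler_piMr; first by rewrite mulr_ge0.
rewrite mulrC ler_pdivrMr // mul1r -natrX ler_nat expnD.
by rewrite mulnC; apply: leq_mul; apply: ltn_expl.
Qed.

Lemma K_ext {R : realType} {K : series R -> Prop} {a b : series R} :
  K a -> (forall x y, a x y = b x y) -> K b.
Proof.
move=> Ka H; have -> : b = a; last by [].
by apply: functional_extensionality => x; apply: functional_extensionality => y.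
Qed.

Lemma conv_szero (R : realType) : convergent (szero R).
Proof. by exists 1, 0; split=> // i j; rewrite /szero normr0 mul0r. Qed.

Lemma conv_sone (R : realType) : convergent (sone R).
Proof.
exists 1, 1; split; first exact: ltr01.
move=> i j; rewrite expr1n mulr1 /sone; case: ifP => _; by rewrite ?normr1 ?normr0 ?ler01.
Qed.

Lemma conv_spow (R : realType) (f : series R) n : convergent f -> convergent (spow f n).
Proof. by move=> cf; elim: n => [|n IH] /=; [exact: conv_sone | exact: conv_smul]. Qed.

Lemma smul_szero (R : realType) (b : series R) i j : smul (szero R) b i j = 0.
Proof. by rewrite /smul big1 // => k _; rewrite big1 // => l _; rewrite /szero mul0r. Qed.

Lemma smul_sone_l (R : realType) (a : series R) i j : smul (sone R) a i j = a i j.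
Proof.
rewrite /smul big_ord_recl big_ord_recl /= /sone eqxx /= mul1r !subn0.
rewrite big1 ?addr0; last by move=> l _; rewrite mul0r.
rewrite big1 ?addr0 // => k _; rewrite big1 // => l _; by rewrite mul0r.
Qed.

Lemma smul_sone_r (R : realType) (a : series R) i j : smul a (sone R) i j = a i j.
Proof. by rewrite smulC smul_sone_l. Qed.

Lemma smul_addl (R : realType) (a a' b : series R) i j :
  smul (sadd a a') b i j = smul a b i j + smul a' b i j.
Proof.
rewrite /smul -big_split; apply: eq_bigr => k _.
rewrite -big_split; apply: eq_bigr => l _; by rewrite /sadd mulrDl.
Qed.

Lemma smul_suml (R : realType) (T : finType) (c : T -> R[i]) (x : T -> series R) (b : series R) i j :
  smul (fun k l => \sum_t c t * x t k l) b i j = \sum_t c t * smul (x t) b i j.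
Proof.
rewrite /smul.
under [RHS]eq_bigr => t _ do rewrite mulr_sumr.
rewrite [RHS]exchange_big; apply: eq_bigr => k _.
under [RHS]eq_bigr => t _ do rewrite mulr_sumr.
rewrite [RHS]exchange_big; apply: eq_bigr => l _.
by rewrite mulr_suml; apply: eq_bigr => t _; rewrite mulrA.
Qed.

Lemma min_nat {P : nat -> Prop} : (exists m, P m) ->
  exists m, P m /\ forall m', P m' -> (m <= m')%N.
Proof.
have H : forall N m, (m <= N)%N -> P m -> exists m0, P m0 /\ forall m', P m' -> (m0 <= m')%N.
  elim=> [|N IH] m hm Pm.
    by exists m; split=> // m' _; move: hm; rewrite leqn0 => /eqP ->.
  case: (classic (exists m', P m' /\ (m' < m)%N)) => [[m' [Pm' lt]] | nex].
    by apply: (IH m') => //; lia.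
  exists m; split=> // m' Pm'; rewrite leqNgt; apply/negP => lt; apply: nex.
  by exists m'.
by move=> [m Pm]; exact: (H m m).
Qed.

Lemma span_fin (R : realType) (K : series R -> Prop) (T : finType) (E : T -> series R) :
  (forall t, convergent (E t)) ->
  (forall g, convergent g -> exists c : T -> R[i], K (fun x y => g x y - \sum_t c t * E t x y)) ->
  quot_spanned_by K #|T|.
Proof.
move=> cE sp; exists (fun k => E (enum_val k)); split=> [k|g cg]; first exact: cE.
have [c Kc] := sp g cg; exists (fun k => c (enum_val k)).
apply: (K_ext Kc) => x y; congr (_ - _).
rewrite (reindex (enum_val : 'I_#|T| -> T)) //; apply: onW_bij; exact: enum_val_bij.
Qed.

Lemma ind_sum {R : realType} {n m} (jo : 'I_n) (d : 'I_m -> R[i]) (F : 'I_n -> 'I_m -> R[i]) :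
  \sum_(t : 'I_n * 'I_m) (if t.1 == jo then d t.2 else 0) * F t.1 t.2 =
  \sum_k d k * F jo k.
Proof.
rewrite -(pair_bigA _ (fun i k => (if i == jo then d k else 0) * F i k)) /=.
rewrite (bigD1 jo) //= eqxx [X in _ + X]big1 ?addr0 //.
move=> i /negbTE ->; rewrite big1 // => k _; by rewrite mul0r.
Qed.

Theorem mainTheorem2 (R : realType) (K : series R -> Prop) (f : series R) (n : nat) :
  ideal K -> finite_mult K ->
  convergent f -> (1 <= n)%N -> K (spow f n) ->
  exists mK mKf : nat,
    [/\ has_mult K mK, has_mult (ideal_add_gen K f) mKf & (mK <= n * mKf)%N].
Proof.
move=> [hconv hz hadd hmul] [m0 sp0] cf n1 Kfn.
have [mK [spK minK]] := min_nat (ex_intro _ m0 sp0).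
have sp1 : quot_spanned_by (ideal_add_gen K f) m0.
  have [e [ce spe]] := sp0; exists e; split=> // g cg.
  have [c Kc] := spe g cg; exists c.
  exists (fun i j => g i j - \sum_(k < m0) c k * e k i j), (szero R); split=> //.
    exact: conv_szero.
  by move=> x y; rewrite /sadd smul_szero addr0.
have [mKf [spKf minKf]] := min_nat (ex_intro _ m0 sp1).
exists mK, mKf; split; [by split | by split |].
apply: minK.
have [e [ce spe]] := spKf.
pose E (t : 'I_n * 'I_mKf) := smul (e t.2) (spow f t.1).
have cE t : convergent (E t) by apply: conv_smul; [exact: ce | exact: conv_spow].
have claim : forall j, (j <= n)%N -> forall g, convergent g ->
    exists c : 'I_n * 'I_mKf -> R[i], exists h, convergent h /\
      K (fun x y => g x y - \sum_t c t * E t x y - smul h (spow f j) x y).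
  elim=> [|j IH] hj g cg.
    exists (fun _ => 0), g; split=> //; apply: (K_ext hz) => x y.
    by rewrite /szero /= smul_sone_r big1 ?subr0 ?subrr // => t _; rewrite mul0r.
  have [c [h [ch Kold]]] := IH (ltnW hj) g cg.
  have [d [k0 [g' [Kk0 cg' Hid]]]] := spe h ch.
  pose jo : 'I_n := Ordinal hj.
  exists (fun t => c t + (if t.1 == jo then d t.2 else 0)), g'; split=> //.
  have Kk : K (smul (spow f j) k0) by apply: hmul => //; exact: conv_spow.
  apply: (K_ext (hadd _ _ Kold Kk)) => x y.
  have eqh : forall k l, h k l = \sum_t d t * e t k l + sadd k0 (smul g' f) k l.
    by move=> k l; rewrite -Hid; ring.
  have e1 : smul h (spow f j) x y = \sum_t d t * smul (e t) (spow f j) x y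
      + smul k0 (spow f j) x y + smul g' (spow f j.+1) x y.
    rewrite (@smul_local _ h (spow f j) (sadd (fun k l => \sum_t d t * e t k l)
                (sadd k0 (smul g' f))) (spow f j)); last by move=> k l _ _; split; [rewrite eqh|].
    rewrite smul_addl smul_suml smul_addl -addrA; congr (_ + (_ + _)).
    by rewrite smulA.
  have e2 : \sum_t (c t + (if t.1 == jo then d t.2 else 0)) * E t x y
      = \sum_t c t * E t x y + \sum_k d k * smul (e k) (spow f j) x y.
    rewrite -(ind_sum jo d (fun i k => smul (e k) (spow f i) x y)) -big_split /=.
    by apply: eq_bigr => t _; rewrite mulrDl.
  rewrite /sadd e1 e2 (@smulC _ k0); ring.
suff sp : forall g, convergent g -> exists c : 'I_n * 'I_mKf -> R[i],
    K (fun x y => g x y - \sum_t c t * E t x y).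
  by have := @span_fin _ K _ E cE sp; rewrite card_prod !card_ord.
move=> g cg; have [c [h [ch Kfin]]] := claim n (leqnn n) g cg.
exists c; apply: (K_ext (hadd _ _ Kfin (hmul _ _ ch Kfn))) => x y; rewrite /sadd; ring.
Qed.
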